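(* Let $\mathcal{X}$ be a feature space and $\mathcal{Y}=\{+1,-1\}$. Let $p(\boldsymbol{x},y)$ be a joint density on $\mathcal{X}\times\mathcal{Y}$ with class priors $\pi_+=p(y=+1)$, $\pi_-=p(y=-1)=1-\pi_+$ and class-conditional densities $p_+(\boldsymbol{x})=p(\boldsymbol{x}\mid y=+1)$, $p_-(\boldsymbol{x})=p(\boldsymbol{x}\mid y=-1)$. Suppose pairwise comparison data are generated as follows: two labeled examples $(\boldsymbol{x},y)$ and $(\boldsymbol{x}',y')$ are drawn independently from $p(\boldsymbol{x},y)$, and the unlabeled pair $(\boldsymbol{x},\boldsymbol{x}')$ is collected as a pairwise comparison if and only if $(y,y')\in\{(+1,+1),(+1,-1),(-1,-1)\}$; the dataset $\widetilde{\mathcal{D}}=\{(\boldsymbol{x}_i,\boldsymbol{x}_i')\}_{i=1}^n$ consists of $n$ independently collected such pairs. Let $$q(\boldsymbol{x},\boldsymbol{x}')=\pi_+^2p_+(\boldsymbol{x})p_+(\boldsymbol{x}')+\pi_-^2p_-(\boldsymbol{x})p_-(\boldsymbol{x}')+\pi_+\pi_-p_+(\boldsymbol{x})p_-(\boldsymbol{x}'),\qquad \widetilde{p}(\boldsymbol{x},\boldsymbol{x}')=\frac{q(\boldsymbol{x},\boldsymbol{x}')}{\pi_+^2+\pi_-^2+\pi_+\pi_-}.$$ Then the collected pairs are independently drawn from $\widetilde{p}(\boldsymbol{x},\boldsymbol{x}')$, i.e. $\widetilde{\mathcal{D}}\stackrel{\mathrm{i.i.d.}}{\sim}\widetilde{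p}(\boldsymbol{x},\boldsymbol{x}')$.
   Context: The true labels $y,y'$ are never observed by the learner; only the pair $(\boldsymbol{x},\boldsymbol{x}')$ is recorded. The density of a collected pair is the conditional density of $(\boldsymbol{x},\boldsymbol{x}')$ given the event $(y,y')\in\{(+1,+1),(+1,-1),(-1,-1)\}$. *)

(* Defs.v *)
From HB Require Import structures.
From mathcomp Require Import all_boot all_order all_algebra.
From mathcomp Require Import all_classical all_reals all_analysis.
Set Implicit Arguments. Unset Strict Implicit. Unset Printing Implicit Defensive.
Import Order.TTheory GRing.Theory Num.Theory.
Local Open Scope classical_set_scope.
Local Open Scope ring_scope.

(* Labels Y = {+1,-1} are encoded as bool: true = +1, false = -1. *)

(* P (a probability on X * Y) has joint density p(x,y) = pi_y p_y(x) w.r.t.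
   mu (x) counting measure on Y, i.e. class prior pi_+ = pip, pi_- = 1 - pip,
   class-conditional densities pp = p_+ and pn = p_-. *)
Definition has_joint_density d (X : measurableType d) (R : realType)
  (mu : {measure set X -> \bar R}) (pip : R) (pp pn : X -> R)
  (P : set (X * bool) -> \bar R) : Prop :=
  forall B : set (X * bool), measurable B ->
    P B = (pip%:E * \int[mu]_(x in [set x | B (x, true)]) (pp x)%:E
           + (1 - pip)%:E * \int[mu]_(x in [set x | B (x, false)]) (pn x)%:E)%E.

Definition is_density d (X : measurableType d) (R : realType)
  (mu : {measure set X -> \bar R}) (f : X -> R) : Prop :=
  measurable_fun setT f /\ (forall x, 0 <= f x) /\
  (\int[mu]_x (f x)%:E = 1)%E.

Definition collected {X : Type} : set ((X * bool) * (X * bool)) :=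
  [set z | (z.1.2, z.2.2) \in [:: (true, true); (true, false); (false, false)]].

Definition unlabel {X : Type} (z : (X * bool) * (X * bool)) : X * X :=
  (z.1.1, z.2.1).

Definition cond_prob {T : Type} (R : realType) (Q : set T -> \bar R)
  (B E : set T) : R :=
  fine (Q (B `&` E)) / fine (Q E).

Definition q_pair {X : Type} (R : realType) (pip : R) (pp pn : X -> R)
  (z : X * X) : R :=
  let pin := 1 - pip in
  pip ^+ 2 * pp z.1 * pp z.2 + pin ^+ 2 * pn z.1 * pn z.2
  + pip * pin * pp z.1 * pn z.2.

Definition ptilde {X : Type} (R : realType) (pip : R) (pp pn : X -> R)
  (z : X * X) : R :=
  let pin := 1 - pip in
  q_pair pip pp pn z / (pip ^+ 2 + pin ^+ 2 + pip * pin).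

(* Main.v *)
Require Import Defs.
From HB Require Import structures.
From mathcomp Require Import all_boot all_order all_algebra.
From mathcomp Require Import all_classical all_reals all_analysis.
Import Order.TTheory GRing.Theory Num.Theory.
From mathcomp Require Import measurable_realfun lebesgue_integral_nonneg ring lra.
Import numFieldNormedType.Exports.
Local Open Scope classical_set_scope.
Local Open Scope ring_scope.
Section density.
Local Open Scope ereal_scope.
Context d (T : measurableType d) (R : realType).
Variables (nu mu : {measure set T -> \bar R}) (g : T -> R).
Hypothesis mg : measurable_fun setT g.
Hypothesis g0 : forall x, (0 <= g x)%R.
Hypothesis H : forall A, measurable A -> nu A = \int[mu]_(x in A) (g x)%:E.

Import HBNNSimple.

Lemma density_change (f : T -> \bar R) (E : set T) : (forall x, 0 <= f x) ->
    measurable E -> measurable_fun E f ->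
  \int[mu]_(x in E) (f x * (g x)%:E) = \int[nu]_(x in E) f x.
Proof.
move=> f0 mE mf.
have mgE : measurable_fun E (EFin \o g).
  by apply/measurable_EFinP; exact: measurable_funTS.
pose h := nnsfun_approx mE mf.
have -> : \int[nu]_(x in E) f x =
    lim (\int[nu]_(x in E) (EFin \o h n) x @[n --> \oo]).
  have fE x : E x -> f x = lim ((EFin \o h n) x @[n --> \oo]).
    by move=> Ex; apply/esym/cvg_lim => //; exact: cvg_nnsfun_approx.
  under eq_integral => x /[!inE] /fE -> //.
  apply: monotone_convergence => //.
  - move=> n; apply/measurable_EFinP.
    by apply: (measurable_funS measurableT) => //; exact/measurable_funP.
  - by move=> n x Ex //=; rewrite lee_fin.
  - by move=> x Ex a b ab; rewrite lee_fin; exact/lefP/nd_nnsfun_approx.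
have -> : \int[mu]_(x in E) (f x * (g x)%:E) =
    lim (\int[mu]_(x in E) ((EFin \o h n) x * (g x)%:E) @[n --> \oo]).
  have fg x : E x -> f x * (g x)%:E = lim (((EFin \o h n) x * (g x)%:E) @[n --> \oo]).
    by move=> Ex; apply/esym/cvg_lim => //; apply: cvgeZr => //;
      exact: cvg_nnsfun_approx.
  under eq_integral => x /[!inE] /fg -> //.
  apply: monotone_convergence => [//| | |].
  - move=> n; apply/emeasurable_funM => //; apply/measurable_funTS.
    exact/measurable_EFinP.
  - by move=> n x Ex /=; rewrite mule_ge0 ?lee_fin.
  - by move=> x Ex a b ab/=; rewrite lee_wpmul2r ?lee_fin//; exact/lefP/nd_nnsfun_approx.
suff suf n : \int[mu]_(x in E) ((EFin \o h n) x * (g x)%:E) =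
    \int[nu]_(x in E) (EFin \o h n) x.
  by under eq_fun do rewrite suf.
transitivity (\int[nu]_(x in E)
   (\sum_(y \in range (h n)) (y * \1_(h n @^-1` [set y]) x)%:E)); last first.
  by apply: eq_integral => t tE; rewrite /= fimfunE -fsumEFin.
have indich m r : measurable_fun E (fun x => (r * \1_(h m @^-1` [set r]) x)%:E).
  by apply: (measurable_comp measurableT) => //; exact: measurable_funM.
rewrite ge0_integral_fsum//; last by move=> m y Ey; exact: nnfun_muleindic_ge0.
transitivity (\int[mu]_(x in E) (\sum_(y \in range (h n))
    (y * \1_(h n @^-1` [set y]) x)%:E * (g x)%:E)).
  under [RHS]eq_integral => x xE.
    rewrite -ge0_mule_fsuml => [|y]; last exact: nnfun_muleindic_ge0.
    rewrite fsumEFin // -(fimfunE _ x); over.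
  by [].
rewrite ge0_integral_fsum//; last 2 first.
  - move=> y; apply: emeasurable_funM => //.
  - move=> m y Ey; apply: mule_ge0; last by rewrite lee_fin. by rewrite EFinM; exact: nnfun_muleindic_ge0.
apply: eq_fsbigr => r rhn.
under [RHS]eq_integral do rewrite EFinM.
rewrite integralZl_indic_nnsfun => //.
under eq_integral do rewrite EFinM -muleA.
rewrite ge0_integralZl//.
- under eq_integral do rewrite muleC.
  rewrite (eq_integral ((EFin \o g) \_ (h n @^-1` [set r]))); last first.
    by move=> x xE; rewrite epatch_indic.
  have mhr : measurable (h n @^-1` [set r]).
    by rewrite -[X in measurable X]setTI; exact: (measurable_funP (h n)).
  rewrite -integral_mkcondr.
  have -> : \int[mu]_(x in E `&` h n @^-1` [set r]) (EFin \o g) x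
      = nu (E `&` h n @^-1` [set r]) by rewrite H //; exact: measurableI.
  by rewrite integral_indic// setIC.
- apply: emeasurable_funM; first exact/measurable_EFinP.
  exact: mgE.
- by move=> t Et; rewrite mule_ge0 ?lee_fin.
- by move: rhn; rewrite inE => -[t _ <-]; rewrite lee_fin.
Qed.
End density.

Definition mpf d (X : measurableType d) (R : realType) (mu : {measure set X -> \bar R})
  (b : bool) : {measure set (X * bool)%type -> \bar R} :=
  @measure_function_pushforward__canonical__measure_function_Measure _ _ X _ R mu
    (pair^~ b) (pair2_measurable b).
Arguments mpf {d X R}.

Lemma mpre2 d d' (X : measurableType d) (Y : measurableType d') (A : set (X * Y)) (b : Y) :
  measurable A -> measurable [set x | A (x, b)].
Proof.
move=> mA; have := pair2_measurable b measurableT mA; rewrite setTI; exact.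
Qed.

Section intP.
Local Open Scope ereal_scope.
Context d (X : measurableType d) (R : realType) (mu : {measure set X -> \bar R}).
Variables (pip : R) (pip_ge0 : (0 <= pip)%R) (pip_le1 : (pip <= 1)%R)
  (pp pn : X -> R) (pp_dens : is_density mu pp) (pn_dens : is_density mu pn)
  (P : probability (X * bool)%type R)
  (P_dens : has_joint_density mu pip pp pn P).

Let g (z : X * bool) : R := if z.2 then (pip * pp z.1)%R else ((1 - pip) * pn z.1)%R.

Let mg : measurable_fun setT g.
Proof.
case: pp_dens => mpp _; case: pn_dens => mpn _.
apply: (@measurable_fun_if_pair _ _ _ _ (fun x => pip * pp x)%R (fun x => (1 - pip) * pn x)%R).
- by apply: measurable_funM => //; exact: measurable_cst.
- by apply: measurable_funM => //; exact: measurable_cst.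
Qed.

Let g0 z : (0 <= g z)%R.
Proof.
case: pp_dens => _ [pp0 _]; case: pn_dens => _ [pn0 _].
rewrite /g; case: ifP => _; apply: mulr_ge0 => //; by rewrite subr_ge0.
Qed.

Let mu2 := measure_add (mpf mu true) (mpf mu false).

Let int_mu2 (f : X * bool -> \bar R) (D : set (X * bool)) : measurable D ->
  (forall z, 0 <= f z) -> measurable_fun setT f ->
  \int[mu2]_(z in D) f z = \int[mu]_(x in pair^~ true @^-1` D) f (x, true)
                          + \int[mu]_(x in pair^~ false @^-1` D) f (x, false).
Proof.
move=> mD f0 mf; rewrite ge0_integral_measure_add//; last exact: measurable_funTS.
have E b : \int[mpf mu b]_(z in D) f z = \int[mu]_(x in pair^~ b @^-1` D) f (x, b).
  exact: (ge0_integral_pushforward (pair2_measurable b) mu mD (measurable_funTS mf)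
           (fun z _ => f0 z)).
by rewrite !E.
Qed.

Let H A : measurable A -> P A = \int[mu2]_(x in A) (g x)%:E.
Proof.
move=> mA.
have g0' : forall z, 0 <= (g z)%:E by move=> z; rewrite lee_fin.
have mg' : measurable_fun setT (fun z => (g z)%:E) by exact/measurable_EFinP.
rewrite int_mu2//.
have [mpp [pp0 _]] := pp_dens; have [mpn [pn0 _]] := pn_dens.
rewrite P_dens// /g /=.
rewrite -ge0_integralZl_EFin//.
all: try rewrite -ge0_integralZl_EFin//.
all: first [exact: mpre2 | by move=> x _; rewrite lee_fin | by apply/measurable_funTS/measurable_EFinP | by rewrite subr_ge0 | idtac].
Qed.

Lemma intP (f : X * bool -> \bar R) : (forall z, 0 <= f z) -> measurable_fun setT f ->
  \int[P]_z f z = \int[mu]_x (f (x, true) * (pip * pp x)%:E)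
                 + \int[mu]_x (f (x, false) * ((1 - pip) * pn x)%:E).
Proof.
move=> f0 mf.
rewrite -(@density_change _ _ _ P mu2 g mg g0 H f setT f0 measurableT mf).
rewrite int_mu2//.
- by move=> z; rewrite mule_ge0// lee_fin.
- by apply: emeasurable_funM => //; exact/measurable_EFinP.
Qed.

End intP.

Section main.
Local Open Scope ereal_scope.
Context d (X : measurableType d) (R : realType) (mu : {measure set X -> \bar R})
  (mu_sfin : sigma_finite setT mu).

Let smu : {sigma_finite_measure set X -> \bar R} :=
  HB.pack (mu : set X -> \bar R) mu
    (isSFinite.Build _ _ _ (mu : set X -> \bar R) (sfinite_measure_sigma_finite mu_sfin))
    (isSigmaFinite.Build _ _ _ (mu : set X -> \bar R) mu_sfin).

Variables (pip : R) (pip_ge0 : (0 <= pip)%R) (pip_le1 : (pip <= 1)%R)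
  (pp pn : X -> R) (pp_dens : is_density mu pp) (pn_dens : is_density mu pn)
  (P : probability (X * bool)%type R)
  (P_dens : has_joint_density mu pip pp pn P).

Definition J (f : X -> R) (A : set (X * X)) x := \int[mu]_y (\1_A (x, y) * f y)%:E.

Lemma J_ge0 f A x : is_density mu f -> 0 <= J f A x.
Proof.
move=> [mf [f0 _]]; apply: integral_ge0 => y _; rewrite lee_fin mulr_ge0//.
Qed.

Lemma J_le1 f A x : measurable A -> is_density mu f -> J f A x <= 1.
Proof.
move=> mA [mf [f0 f1]]; rewrite -f1; apply: ge0_le_integral => //.
- by move=> y _; rewrite lee_fin mulr_ge0.
- apply/measurable_EFinP; apply: measurable_funM => //.
  exact: (measurable_fun_pair2 _ (measurable_indic mA)).
- exact/measurable_EFinP.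
- move=> y _; rewrite lee_fin; rewrite indicE; case: ((x, y) \in A) => /=.
  by rewrite mul1r. by rewrite mul0r.
Qed.

Lemma J_fin f A x : measurable A -> is_density mu f -> J f A x \is a fin_num.
Proof.
move=> mA fd; rewrite ge0_fin_numE ?J_ge0//.
by apply: le_lt_trans (J_le1 f A x mA fd) _; exact: ltry.
Qed.

Lemma JE f A x : measurable A -> is_density mu f -> J f A x = (fine (J f A x))%:E.
Proof. by move=> mA fd; rewrite fineK// J_fin. Qed.

Lemma mJ f A : measurable A -> is_density mu f ->
  measurable_fun setT (fun x => fine (J f A x)).
Proof.
move=> mA [mf [f0 _]].
apply: (measurableT_comp (fine_measurable measurableT)).
have mF : measurable_fun setT (fun z : X * X => (\1_A z * f z.2)%:E).
  apply/measurable_EFinP; apply: measurable_funM; first exact: measurable_indic.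
  exact: measurableT_comp.
have F0 : forall z : X * X, 0 <= (\1_A z * f z.2)%:E.
  by move=> z; rewrite lee_fin mulr_ge0.
have := @measurable_fun_fubini_tonelli_F _ _ _ _ _ smu _ mF F0.
exact.
Qed.

Lemma mq : measurable_fun setT (q_pair pip pp pn).
Proof.
case: pp_dens => mpp _; case: pn_dens => mpn _.
have m1 (f : X -> R) : measurable_fun setT f -> measurable_fun [set: X * X] (fun z : X * X => f z.1).
  by move=> mf; exact: (measurableT_comp mf measurable_fst).
have m2 (f : X -> R) : measurable_fun setT f -> measurable_fun [set: X * X] (fun z : X * X => f z.2).
  by move=> mf; exact: (measurableT_comp mf measurable_snd).
rewrite /q_pair; apply: measurable_funD; first apply: measurable_funD.
- apply: measurable_funM; last exact: m2.
  by apply: measurable_funM; [exact: measurable_cst| exact: m1].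
- apply: measurable_funM; last exact: m2.
  by apply: measurable_funM; [exact: measurable_cst| exact: m1].
- apply: measurable_funM; last exact: m2.
  by apply: measurable_funM; [exact: measurable_cst| exact: m1].
Qed.

Lemma inner_dec A x : measurable A ->
  \int[mu]_y (\1_A (x, y) * q_pair pip pp pn (x, y))%:E =
  ((pip ^+ 2 * pp x) * fine (J pp A x)
   + ((1 - pip) ^+ 2 * pn x + pip * (1 - pip) * pp x) * fine (J pn A x))%:E.
Proof.
move=> mA.
have [mpp [pp0 _]] := pp_dens; have [mpn [pn0 _]] := pn_dens.
have pin0 : (0 <= 1 - pip)%R by rewrite subr_ge0.
have mi (f : X -> R) : measurable_fun setT f -> measurable_fun setT (fun y => (\1_A (x, y) * f y)%:E).
  move=> mf; apply/measurable_EFinP; apply: measurable_funM => //.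
  exact: (measurable_fun_pair2 _ (measurable_indic mA)).
transitivity (\int[mu]_y ((pip ^+ 2 * pp x)%:E * (\1_A (x, y) * pp y)%:E
   + ((1 - pip) ^+ 2 * pn x + pip * (1 - pip) * pp x)%:E * (\1_A (x, y) * pn y)%:E)).
  by apply: eq_integral => y _; rewrite -!EFinM -EFinD /q_pair /=; congr EFin; ring.
rewrite ge0_integralD//; last 4 first.
- by move=> y _; rewrite -EFinM lee_fin !mulr_ge0.
- by apply: emeasurable_funM => //; exact: mi.
- by move=> y _; rewrite -EFinM lee_fin !mulr_ge0// addr_ge0// !mulr_ge0.
- by apply: emeasurable_funM => //; exact: mi.
rewrite !ge0_integralZl_EFin//; last 6 first.
- by move=> y _; rewrite lee_fin mulr_ge0.
- exact: mi.
- by rewrite addr_ge0// !mulr_ge0.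
- by move=> y _; rewrite lee_fin mulr_ge0.
- exact: mi.
- by rewrite !mulr_ge0.
rewrite -/(J pp A x) -/(J pn A x) (JE pp A x mA pp_dens) (JE pn A x mA pn_dens).
by rewrite -!EFinM -EFinD.
Qed.

Lemma JsetE (f : X -> R) (A : set (X * X)) x : (\int[mu]_(y in [set y | A (x, y)]) (f y)%:E) = J f A x.
Proof.
rewrite integral_mkcond /J; apply: eq_integral => y _; rewrite /restrict indicE.
have -> : ((x, y) \in A) = (y \in [set y | A (x, y)]) by [].
by case: ifP => _; rewrite ?mul1r ?mul0r.
Qed.

Lemma munlabel : measurable_fun setT (@unlabel X).
Proof.
apply: measurable_fun_pair.
- exact: (measurableT_comp measurable_fst measurable_fst).
- exact: (measurableT_comp measurable_fst measurable_snd).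
Qed.

Lemma collectedE : @collected X =
  ~` (([set: X] `*` [set false]) `*` ([set: X] `*` [set true])).
Proof.
apply/funext => -[[x b] [x' b']] /=; apply/propext; rewrite /collected /=.
case: b; case: b' => /=.
all: split; rewrite !inE /= => H //.
all: try by case: H => [[_ ]] [_ ].
all: try by move=> [[_ e] [_ e']].
all: by exfalso; apply: H.
Qed.

Lemma mS A : measurable A -> measurable (@unlabel X @^-1` A `&` collected).
Proof.
move=> mA; apply: measurableI.
  by rewrite -[X in measurable X]setTI; exact: munlabel.
rewrite collectedE; apply: measurableC; apply: measurableX; apply: measurableX => //.
Qed.

Lemma PS A x b : measurable A ->
  P (xsection (@unlabel X @^-1` A `&` collected) (x, b)) =
  if b then (pip * fine (J pp A x) + (1 - pip) * fine (J pn A x))%:E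
  else ((1 - pip) * fine (J pn A x))%:E.
Proof.
move=> mA; rewrite P_dens; last by apply: measurable_xsection; exact: mS.
have E2 : [set y | xsection (@unlabel X @^-1` A `&` collected) (x, b) (y, false)]
   = [set y | A (x, y)].
  apply/funext => y /=; apply/propext; rewrite /xsection /= inE /collected /unlabel /=.
  by case: b; rewrite /= !inE /=; split => [[]|].
rewrite E2 JsetE (JE pn A x mA pn_dens); clear E2.
case: b.
- have E1 : [set y | xsection (@unlabel X @^-1` A `&` collected) (x, true) (y, true)]
     = [set y | A (x, y)].
    apply/funext => y /=; apply/propext; rewrite /xsection /= inE /collected /unlabel /=.
    by rewrite /= !inE /=; split => [[]|].
  by rewrite E1 JsetE (JE pp A x mA pp_dens) -!EFinM -EFinD.
- have E1 : [set y | xsection (@unlabel X @^-1` A `&` collected) (x, false) (y, true)]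
     = set0.
    apply/funext => y /=; apply/propext; rewrite /xsection /= inE /collected /unlabel /=.
    by rewrite /= !inE /=; split => [[]|].
  by rewrite E1 integral_set0 mule0 add0e -EFinM.
Qed.

Lemma K A : measurable A ->
  (P \x P)%E (@unlabel X @^-1` A `&` collected) =
  \int[mu]_x \int[mu]_y (\1_A (x, y) * q_pair pip pp pn (x, y))%:E.
Proof.
move=> mA.
have [mpp [pp0 _]] := pp_dens; have [mpn [pn0 _]] := pn_dens.
have pin0 : (0 <= 1 - pip)%R by rewrite subr_ge0.
have mJp := mJ pp A mA pp_dens; have mJn := mJ pn A mA pn_dens.
have Jp0 x : (0 <= fine (J pp A x))%R by apply: fine_ge0; apply: J_ge0.
have Jn0 x : (0 <= fine (J pn A x))%R by apply: fine_ge0; apply: J_ge0.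
rewrite /product_measure1.
rewrite (@intP _ _ _ mu pip pip_ge0 pip_le1 pp pn pp_dens pn_dens P P_dens); last 2 first.
- by move=> z; exact: measure_ge0.
- by have := measurable_fun_xsection P (mS A mA); exact.
have e1 : \int[mu]_x ((P \o xsection (@unlabel X @^-1` A `&` collected)) (x, true)
     * (pip * pp x)%:E)
   = \int[mu]_x ((pip * fine (J pp A x) + (1 - pip) * fine (J pn A x)) * (pip * pp x))%:E.
  by apply: eq_integral => x _; rewrite /= PS// -EFinM.
have e2 : \int[mu]_x ((P \o xsection (@unlabel X @^-1` A `&` collected)) (x, false)
     * ((1 - pip) * pn x)%:E)
   = \int[mu]_x (((1 - pip) * fine (J pn A x)) * ((1 - pip) * pn x))%:E.
  by apply: eq_integral => x _; rewrite /= PS// -EFinM.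
rewrite e1 e2 -ge0_integralD//; last 4 first.
- by move=> x _; rewrite lee_fin !mulr_ge0// addr_ge0// mulr_ge0.
- apply/measurable_EFinP; apply: measurable_funM.
    apply: measurable_funD; apply: measurable_funM => //; exact: measurable_cst.
  by apply: measurable_funM => //; exact: measurable_cst.
- by move=> x _; rewrite lee_fin !mulr_ge0.
- apply/measurable_EFinP; apply: measurable_funM.
    by apply: measurable_funM => //; exact: measurable_cst.
  by apply: measurable_funM => //; exact: measurable_cst.
apply: eq_integral => x _; rewrite inner_dec// -EFinD; congr EFin; ring.
Qed.

Lemma Jset1 f x : is_density mu f -> fine (J f setT x) = 1%R.
Proof.
move=> [mf [f0 f1]]; rewrite /J.
under eq_integral do rewrite indicE in_setT mul1r.
by rewrite f1.
Qed.

Definition cc := (pip ^+ 2 + (1 - pip) ^+ 2 + pip * (1 - pip))%R.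

Lemma Kden : (P \x P)%E collected = cc%:E.
Proof.
have [mpp [pp0 pp1]] := pp_dens; have [mpn [pn0 pn1]] := pn_dens.
have pin0 : (0 <= 1 - pip)%R by rewrite subr_ge0.
have := K setT measurableT; rewrite preimage_setT setTI => ->.
transitivity (\int[mu]_x ((pip ^+ 2 + pip * (1 - pip))%:E * (pp x)%:E
                         + ((1 - pip) ^+ 2)%:E * (pn x)%:E)).
  apply: eq_integral => x _; rewrite inner_dec// !Jset1// -!EFinM -EFinD.
  congr EFin; ring.
rewrite ge0_integralD//; last 4 first.
- by move=> x _; rewrite -EFinM lee_fin mulr_ge0// addr_ge0// ?sqr_ge0// mulr_ge0.
- by apply: emeasurable_funM => //; exact/measurable_EFinP.
- by move=> x _; rewrite -EFinM lee_fin mulr_ge0// sqr_ge0.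
- by apply: emeasurable_funM => //; exact/measurable_EFinP.
rewrite !ge0_integralZl_EFin//; last 6 first.
- by move=> x _; rewrite lee_fin.
- exact/measurable_EFinP.
- by rewrite sqr_ge0.
- by move=> x _; rewrite lee_fin.
- exact/measurable_EFinP.
- by rewrite addr_ge0// ?sqr_ge0// mulr_ge0.
rewrite pp1 pn1 !mule1 -EFinD /cc; congr EFin; ring.
Qed.

Lemma main_thm A : measurable A ->
    (cond_prob (P \x P)%E (unlabel @^-1` A) collected)%:E
    = (\int[(mu \x mu)%E]_(z in A) (ptilde pip pp pn z)%:E)%E.
Proof.
move=> mA.
have [mpp [pp0 pp1]] := pp_dens; have [mpn [pn0 pn1]] := pn_dens.
have pin0 : (0 <= 1 - pip)%R by rewrite subr_ge0.
have cc0 : (0 < cc)%R by rewrite /cc; nra.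
have kfin : (P \x P)%E (@unlabel X @^-1` A `&` collected) \is a fin_num.
  rewrite ge0_fin_numE ?measure_ge0//; apply: (le_lt_trans (probability_le1 _ (mS A mA))); exact: ltry.
rewrite /cond_prob Kden /=.
move: kfin; rewrite K// => kfin.
have q0 z : (0 <= q_pair pip pp pn z)%R.
  by rewrite /q_pair !addr_ge0// !mulr_ge0// ?sqr_ge0.
have -> : (mu \x mu)%E = (smu \x smu)%E by [].
transitivity (\int[(smu \x smu)%E]_z ((cc^-1)%:E * (\1_A z * q_pair pip pp pn z)%:E)); last first.
  rewrite (integral_mkcond A).
  apply: eq_integral => z _.
  rewrite /restrict indicE /ptilde -/cc; case: ifP => _.
    by rewrite mul1r -EFinM mulrC.
  by rewrite mul0r mule0.
rewrite ge0_integralZl_EFin//; last 3 first.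
- by move=> z _; rewrite lee_fin mulr_ge0.
- apply/measurable_EFinP; apply: measurable_funM; [exact: measurable_indic|exact: mq].
- by rewrite invr_ge0 ltW.
rewrite fubini_tonelli1; last 2 first.
- apply/measurable_EFinP; apply: measurable_funM; [exact: measurable_indic|exact: mq].
- by move=> z; rewrite lee_fin mulr_ge0.
rewrite /fubini_F -(fineK kfin) -EFinM /=; congr EFin; rewrite mulrC.
by [].
Qed.

End main.

Theorem theorem1 (d : measure_display) (X : measurableType d) (R : realType)
  (mu : {measure set X -> \bar R}) (mu_sfin : sigma_finite setT mu)
  (pip : R) (pip_ge0 : 0 <= pip) (pip_le1 : pip <= 1)
  (pp pn : X -> R) (pp_dens : is_density mu pp) (pn_dens : is_density mu pn)
  (P : probability (X * bool)%type R)
  (P_dens : has_joint_density mu pip pp pn P) :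
  forall A : set (X * X)%type, measurable A ->
    (cond_prob (P \x P)%E (unlabel @^-1` A) collected)%:E
    = (\int[(mu \x mu)%E]_(z in A) (ptilde pip pp pn z)%:E)%E.
Proof.
move=> A mA.
exact: (@main_thm d X R mu mu_sfin pip pip_ge0 pip_le1 pp pn pp_dens pn_dens P P_dens A mA).
Qed.
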